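(* Let $\varphi\in\mathcal{L}$. If there is a finite quasi-notional graded doxastic model (QNGDM) $M$ and a world $w$ of $M$ with $(M,w)\models\varphi$, then there exists a finite notional graded doxastic model (NGDM) $M''$ and a world $w''$ of $M''$ with $(M'',w'')\models\varphi$.
   Context: Fix a countably infinite set of atoms $\mathit{Atm}$ and a finite set of agents $\mathit{Agt}=\{1,\dots,n\}$; a group is a non-empty subset $J\subseteq\mathit{Agt}$, and $2^{\mathit{Agt}*}$ denotes the set of groups. $\mathbb{N}_0$ (resp. $\mathbb{N}_1$) are the naturals with (resp. without) $0$, and $\mathbb{N}_0^{\omega}=\mathbb{N}_0\cup\{\omega\}$, $\mathbb{N}_1^{\omega}=\mathbb{N}_1\cup\{\omega\}$ with $\omega$ an infinite element. A multiset over $X$ is a function $f:X\to\mathbb{N}_0^{\omega}$; its support is $\{x:f(x)>0\}$. A possibly infinite sum of grades equals the sum of its non-zero summands if there are finitely many of them and none is $\omega$, and $\omega$ otherwise. For $k\in\mathbb{N}_0$ and a group $J$, $P(J,k)$ is the set of functions $\delta:J\to\mathbb{N}_0$ with $\sum_{i\in J}\delta(i)=k$. $\mathcal{L}_0$: $\alpha::=p\mid\neg\alpha\mid\alpha\wedge\alpha\mid\triangle_i^k\alpha$ ($p\in\mathit{Atm}$, $i\in\mathit{Agt}$, $k\in\mathbb{N}_1^{\omega}$). $\mathcal{L}$: $\varphi::=\alpha\mid\neg\varphi\mid\varphi\wedge\varphi\mid\Box_J^k\varphi$ ($\alpha\in\mathcal{L}_0$, $J$ a group, $k\in\mathbb{N}_0$).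 Consider tuples $M=(W,\mathcal{D},\rho,\mathcal{V})$ with $W$ a set of worlds, $\mathcal{D}:\mathit{Agt}\times W\to$ (multisets over $\mathcal{L}_0$), $\rho:2^{\mathit{Agt}*}\times W\times W\to\mathbb{N}_0^{\omega}$, $\mathcal{V}:\mathit{Atm}\to 2^W$, with satisfaction $(M,w)\models p$ iff $w\in\mathcal{V}(p)$; Boolean clauses as usual; $(M,w)\models\triangle_i^k\alpha$ iff $\mathcal{D}(i,w)(\alpha)\ge k$; $(M,w)\models\Box_J^k\varphi$ iff for all $u\in W$ with $\rho(J,w,u)\le k$, $(M,u)\models\varphi$. Such an $M$ is an NGDM if for all groups $J$ and $w,u\in W$: $\rho(J,w,u)=\sum_{\alpha\in\mathcal{L}_0,(M,u)\not\models\alpha}\sum_{i\in J}\mathcal{D}(i,w)(\alpha)$. Such an $M$ is a QNGDM if for every group $J$ and $w,u\in W$ with $\rho(J,w,u)\ne\omega$: (i) $\rho(J,w,u)\ge\sum_{\alpha\in\mathcal{L}_0,(M,u)\not\models\alpha}\sum_{i\in J}\mathcal{D}(i,w)(\alpha)$; and (ii) there is $\delta\in P(J,\rho(J,w,u))$ with $\sum_{i\in J'}\delta(i)\ge\rho(J',w,u)$ for every non-empty $J'\subset J$. A model is finite if $W$ is finite and each $\mathcal{D}(i,w)$ has finite support. *)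

(* Defs.v *)
From Stdlib Require Import List.
From mathcomp Require Import all_boot.

(* Grades N_0^omega : [Some k] is the natural k, [None] is omega. *)
Definition grade := option nat.

Definition gle (x y : grade) : Prop :=
  match x, y with
  | _, None => True
  | None, Some _ => False
  | Some a, Some b => (a <= b)%N
  end.

Definition gadd (x y : grade) : grade :=
  match x, y with
  | Some a, Some b => Some (a + b)%N
  | _, _ => None
  end.

Definition pgrade := option {k : nat | (0 < k)%N}.
Definition pgrade_val (k : pgrade) : grade :=
  match k with Some k' => Some (proj1_sig k') | None => None end.

Definition group (n : nat) := {J : {set 'I_n} | J != set0}.

Inductive L0 (n : nat) : Type :=
  | L0atom : nat -> L0 n
  | L0neg : L0 n -> L0 n
  | L0and : L0 n -> L0 n -> L0 n
  | L0tri : 'I_n -> pgrade -> L0 n -> L0 n.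

Inductive L (n : nat) : Type :=
  | Lbase : L0 n -> L n
  | Lneg : L n -> L n
  | Land : L n -> L n -> L n
  | Lbox : group n -> nat -> L n -> L n.

Record model (n : nat) := Model {
  W : Type;
  D : 'I_n -> W -> L0 n -> grade;          (* multisets over L0 *)
  rho : group n -> W -> W -> grade;
  V : nat -> W -> Prop
}.
Arguments W {n} _.
Arguments D {n} _ _ _ _.
Arguments rho {n} _ _ _ _.
Arguments V {n} _ _ _.

Fixpoint sat0 {n} (M : model n) (w : W M) (a : L0 n) : Prop :=
  match a with
  | L0atom p => V M p w
  | L0neg b => ~ sat0 M w b
  | L0and b c => sat0 M w b /\ sat0 M w c
  | L0tri i k b => gle (pgrade_val k) (D M i w b)
  end.

Fixpoint sat {n} (M : model n) (w : W M) (phi : L n) : Prop :=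
  match phi with
  | Lbase a => sat0 M w a
  | Lneg psi => ~ sat M w psi
  | Land psi chi => sat M w psi /\ sat M w chi
  | Lbox J k psi => forall u : W M, gle (rho M J w u) (Some k) -> sat M u psi
  end.


Definition gsum_list (s : seq grade) : grade := foldr gadd (Some 0%N) s.

(* Possibly infinite sum of grades, as a relation [is_gsum f s]:
   s is the sum of the non-zero summands if there are finitely many of them
   and none is omega; s = omega otherwise. *)
Definition fin_sum {X : Type} (f : X -> grade) (m : nat) : Prop :=
  exists l : list X, NoDup l /\ (forall x, f x <> Some 0%N -> In x l)
                     /\ gsum_list (map f l) = Some m.

Definition is_gsum {X : Type} (f : X -> grade) (s : grade) : Prop :=
  match s with
  | Some m => fin_sum f m
  | None => ~ exists m, fin_sum f m
  end.

Definition groupD {n} (M : model n) (J : group n) (w : W M) (a : L0 n) : grade :=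
  gsum_list [seq D M i w a | i <- enum (proj1_sig J)].

Definition unsat_sum {n} (M : model n) (J : group n) (w u : W M) (s : grade) : Prop :=
  is_gsum (fun a : {a : L0 n | ~ sat0 M u a} => groupD M J w (proj1_sig a)) s.

Definition is_NGDM {n} (M : model n) : Prop :=
  forall (J : group n) (w u : W M), unsat_sum M J w u (rho M J w u).

Definition is_QNGDM {n} (M : model n) : Prop :=
  forall (J : group n) (w u : W M) (m : nat), rho M J w u = Some m ->
    (exists s, unsat_sum M J w u s /\ gle s (Some m)) /\
    (exists delta : 'I_n -> nat,
        (\sum_(i in proj1_sig J) delta i)%N = m /\
        forall J' : group n, proj1_sig J' \proper proj1_sig J ->
          gle (rho M J' w u) (Some (\sum_(i in proj1_sig J') delta i)%N)).

Definition finite_model {n} (M : model n) : Prop :=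
  (exists l : list (W M), forall w, In w l) /\
  (forall (i : 'I_n) (w : W M), exists l : list (L0 n),
      forall a, D M i w a <> Some 0%N -> In a l).

Arguments L0atom {n} _.
Arguments L0neg {n} _.
Arguments L0and {n} _ _.
Arguments L0tri {n} _ _ _.
Arguments Lbase {n} _.
Arguments Lneg {n} _.
Arguments Land {n} _ _.
Arguments Lbox {n} _ _ _.

(* Main.v *)
Require Import Defs.
From Stdlib Require Import List Permutation ClassicalEpsilon ProofIrrelevance.
From mathcomp Require Import all_boot.
Set Implicit Arguments. Unset Strict Implicit.
Arguments gsum_list s : simpl never.

Lemma gaddC (x y : grade) : gadd x y = gadd y x.
Proof. by case: x => [a|]; case: y => [b|] //=; rewrite addnC. Qed.
Lemma gaddA (x y z : grade) : gadd x (gadd y z) = gadd (gadd x y) z.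
Proof. by case: x => [a|]; case: y => [b|]; case: z => [c|] //=; rewrite addnA. Qed.
Lemma gadd0l x : gadd (Some 0) x = x. Proof. by case: x. Qed.
Lemma gadd0r x : gadd x (Some 0) = x. Proof. by case: x => //= a; rewrite addn0. Qed.

Lemma gsum_nil : gsum_list [::] = Some 0%N. Proof. by []. Qed.
Lemma gsum_cons x l : gsum_list (x :: l) = gadd x (gsum_list l). Proof. by []. Qed.
Lemma gsum_perm (l1 l2 : seq grade) : Permutation l1 l2 -> gsum_list l1 = gsum_list l2.
Proof.
elim => [|x l l' _ IH | x y l | l l' l'' _ IH1 _ IH2] //.
- by rewrite !gsum_cons IH.
- by rewrite !gsum_cons !gaddA (gaddC y x).
- by rewrite IH1 IH2.
Qed.

Lemma gsum_app (l1 l2 : seq grade) : gsum_list (l1 ++ l2) = gadd (gsum_list l1) (gsum_list l2).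
Proof. elim: l1 => [|x l IH]; first by rewrite gsum_nil gadd0l. by rewrite [(x :: l) ++ l2]/= !gsum_cons IH gaddA. Qed.

Lemma gsum_filter {X} (f : X -> grade) l :
  gsum_list (map f (List.filter (fun x => f x != Some 0%N) l)) = gsum_list (map f l).
Proof.
elim: l => //= x l IH; case: eqP => /= [->|_]; by rewrite !gsum_cons IH ?gadd0l.
Qed.

Lemma mapE {A B} (f : A -> B) l : seq.map f l = List.map f l.
Proof. by elim: l => //= a l IH; rewrite gsum_cons IH. Qed.

Lemma gsum_unique {X} (f : X -> grade) l1 l2 :
  NoDup l1 -> NoDup l2 -> (forall x, f x <> Some 0%N -> In x l1) ->
  (forall x, f x <> Some 0%N -> In x l2) ->
  gsum_list (map f l1) = gsum_list (map f l2).
Proof.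
move=> N1 N2 C1 C2; rewrite -gsum_filter -(gsum_filter f l2).
apply: gsum_perm; rewrite !mapE; apply: Permutation_map; apply: NoDup_Permutation.
- exact: NoDup_filter. - exact: NoDup_filter.
move=> x; rewrite !filter_In; split => -[_ H]; split => //; [apply: C2|apply: C1]; exact/eqP.
Qed.

Lemma is_gsum_list {X} (f : X -> grade) l :
  NoDup l -> (forall x, f x <> Some 0%N -> In x l) -> is_gsum f (gsum_list (map f l)).
Proof.
move=> N C; case E: (gsum_list _) => [m|] /=.
  by exists l.
case=> m [l' [N' [C' E']]]. by rewrite (gsum_unique N' N C' C) E in E'.
Qed.

Lemma is_gsum_unique {X} (f : X -> grade) s1 s2 : is_gsum f s1 -> is_gsum f s2 -> s1 = s2.
Proof.
case: s1 => [m1|]; case: s2 => [m2|] //=.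
- move=> [l1 [N1 [C1 E1]]] [l2 [N2 [C2 E2]]].
  by rewrite -E1 -E2; apply: gsum_unique.
- by move=> H H'; case: H'; exists m1.
- by move=> H' H; case: H'; exists m2.
Qed.

Definition dP (P : Prop) : bool := if excluded_middle_informative P then true else false.
Lemma dPP (P : Prop) : reflect P (dP P).
Proof. rewrite /dP; case: excluded_middle_informative => p; by constructor. Qed.

Definition sigl {X} (P : X -> Prop) (l : list X) : list {x | P x} :=
  flat_map (fun a => match excluded_middle_informative (P a) with
                     | left p => [:: exist P a p] | right _ => [::] end) l.

Lemma In_sigl {X} (P : X -> Prop) l (x : {x | P x}) : In x (sigl P l) <-> In (proj1_sig x) l.
Proof.
case: x => a p /=; rewrite /sigl in_flat_map; split.
  by case=> b [Hb]; case: excluded_middle_informative => // q [] // [<-].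
move=> H; exists a; split => //; case: excluded_middle_informative => // q.
by left; rewrite (proof_irrelevance _ p q).
Qed.

Lemma NoDup_sigl {X} (P : X -> Prop) l : NoDup l -> NoDup (sigl P l).
Proof.
elim => [|a l0 Na N IH] /=; first by constructor.
case: excluded_middle_informative => p //=.
constructor => // /In_sigl /= //.
Qed.

Lemma gsum_sigl {X} (P : X -> Prop) (g : X -> grade) l :
  gsum_list (map (fun x : {x | P x} => g (proj1_sig x)) (sigl P l)) =
  gsum_list (map (fun a => if dP (P a) then g a else Some 0%N) l).
Proof.
elim: l => //= a l IH; rewrite {1}/sigl /= -/(sigl P l).
case: excluded_middle_informative => p; case: dPP => // _.
  by rewrite gsum_cons -IH.
by rewrite gsum_cons gadd0l -IH.
Qed.

Lemma is_gsum_sig {X} (P : X -> Prop) (g : X -> grade) l :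
  NoDup l -> (forall a, g a <> Some 0%N -> In a l) ->
  is_gsum (fun x : {x | P x} => g (proj1_sig x))
    (gsum_list (map (fun a => if dP (P a) then g a else Some 0%N) l)).
Proof.
move=> N C; rewrite -gsum_sigl; apply: is_gsum_list; first exact: NoDup_sigl.
by move=> x /C H; apply/In_sigl.
Qed.

Lemma gsum_add {A} (f g : A -> grade) l :
  gsum_list (map (fun b => gadd (f b) (g b)) l) = gadd (gsum_list (map f l)) (gsum_list (map g l)).
Proof.
elim: l => [|b l IH] /=; first by rewrite gsum_nil. rewrite !gsum_cons IH !gaddA; congr gadd; rewrite -!gaddA; congr gadd; exact: gaddC.
Qed.

Lemma gsum_zero {A} (l : list A) : gsum_list (map (fun _ => Some 0%N) l) = Some 0%N.
Proof. by elim: l => //= a l IH; rewrite gsum_cons IH. Qed.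

Lemma gsum_exchange {A B} (F : A -> B -> grade) la lb :
  gsum_list (map (fun a => gsum_list (map (fun b => F a b) lb)) la) =
  gsum_list (map (fun b => gsum_list (map (fun a => F a b) la)) lb).
Proof.
elim: la => /= [|a la IH]; first by rewrite gsum_nil; symmetry; exact: gsum_zero.
by rewrite gsum_cons IH -gsum_add.
Qed.



Lemma gsum_ifmap {A B} (b : bool) (F : A -> B -> grade) (lb : list B) a :
  (if b then gsum_list (map (fun x => F a x) lb) else Some 0%N) =
  gsum_list (map (fun x => if b then F a x else Some 0%N) lb).
Proof. by case: b; rewrite ?gsum_zero. Qed.

Lemma gsum_nz {A} (f : A -> grade) l : gsum_list (map f l) <> Some 0%N ->
  exists a, In a l /\ f a <> Some 0%N.
Proof.
elim: l => //= a l IH; rewrite gsum_cons => H.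
case E: (f a == Some 0%N).
  move/eqP: E => E; rewrite E gadd0l in H; case: (IH H) => b [? ?]; exists b; tauto.
by exists a; split; [left|apply/eqP; rewrite E].
Qed.

Fixpoint maxat0 {n} (a : L0 n) : nat :=
  match a with L0atom p => p | L0neg b => maxat0 b
  | L0and b c => maxn (maxat0 b) (maxat0 c) | L0tri _ _ b => maxat0 b end.
Fixpoint maxatL {n} (f : L n) : nat :=
  match f with Lbase a => maxat0 a | Lneg g => maxatL g
  | Land g h => maxn (maxatL g) (maxatL h) | Lbox _ _ g => maxatL g end.

Lemma mem_In {T : eqType} (x : T) (s : seq T) : x \in s -> In x s.
Proof. elim: s => //= y s IH; rewrite inE => /orP [/eqP ->|/IH]; tauto. Qed.

Lemma uniq_NoDup {T : eqType} (s : seq T) : uniq s -> NoDup s.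
Proof.
elim: s => /= [|x s IH]; first by constructor.
case/andP => H1 H2; constructor; last exact: IH.
move=> H; move/negP: H1; apply; elim: s {IH H2} H => //= y s IH [->|/IH]; rewrite inE ?eqxx //.
by move=> ->; rewrite orbT.
Qed.

Lemma gsum_single {T : eqType} (f : T -> grade) (s : seq T) y :
  uniq s -> y \in s ->
  gsum_list (map (fun z => if z == y then f z else Some 0%N) s) = f y.
Proof.
elim: s => //= x s IH /andP [nx us]; rewrite inE gsum_cons.
case: eqP => [->|ne] /=.
  move=> _; rewrite eqxx.
  have -> : [seq (if z == x then f z else Some 0%N) | z <- s] = [seq Some 0%N | _ <- s].
    apply/eq_in_map => z zs; case: eqP => // E; by move: nx; rewrite -E zs.
  by rewrite gsum_zero gadd0r.
by move=> ys; rewrite ifF ?gadd0l ?IH //; apply/eqP => E; apply: ne; rewrite E.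
Qed.

Lemma gsum_some {T : eqType} (f : T -> nat) (g : T -> grade) (s : seq T) :
  (forall i, i \in s -> g i = Some (f i)) ->
  gsum_list (map g s) = Some (\sum_(i <- s) f i)%N.
Proof.
elim: s => [|x s IH] H; first by rewrite big_nil.
rewrite /= gsum_cons big_cons H ?inE ?eqxx // IH // => i si; apply: H; rewrite inE si orbT. done.
Qed.

Lemma gsum_none {T : eqType} (g : T -> grade) (s : seq T) i :
  i \in s -> g i = None -> gsum_list (map g s) = None.
Proof.
elim: s => //= x s IH; rewrite inE gsum_cons => /orP [/eqP <- -> //|/IH H /H ->].
by case: (g x).
Qed.

Definition maxl {A} (f : A -> nat) (l : list A) := foldr (fun a m => maxn (f a) m) 0%N l.
Lemma maxl_ge {A} (f : A -> nat) l a : In a l -> (f a <= maxl f l)%N.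
Proof.
elim: l => //= b l IH [->|/IH H]; first by rewrite leq_maxl.
exact: leq_trans H (leq_maxr _ _).
Qed.

Lemma size_length {A} (l : list A) : size l = length l.
Proof. by elim: l => //= a l ->. Qed.

Lemma gle_trans x y z : gle x y -> gle y z -> gle x z.
Proof. case: x => [a|]; case: y => [b|]; case: z => [c|] //=; exact: leq_trans. Qed.
Lemma gle_refl x : gle x x. Proof. by case: x => //= a; exact: leqnn. Qed.

Section Constr.
Variables (n : nat) (M : model n) (w0 : W M) (lw : list (W M)).
Variable (Sup : 'I_n -> W M -> list (L0 n)).
Variable (B : nat).
Hypothesis Hlw : forall w, In w lw.
Hypothesis HSup : forall i w a, D M i w a <> Some 0%N -> In a (Sup i w).
Hypothesis HB : forall i w a, In a (Sup i w) -> (maxat0 a < B)%N.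
Hypothesis HQ : is_QNGDM M.

Local Notation grp := {J : {set 'I_n} | J != set0}.
Local Notation W2 := ('I_(size lw) * option grp)%type.
Definition orig (y : W2) : W M := List.nth (nat_of_ord y.1) lw w0.

Definition Ldec (a b : L0 n) : {a = b} + {a <> b} := excluded_middle_informative (a = b).
Definition Sx (x : W M) : list (L0 n) := nodup Ldec (flat_map (fun i => Sup i x) (enum 'I_n)).

Lemma Sx_In x i a : D M i x a <> Some 0%N -> In a (Sx x).
Proof.
move=> H; rewrite /Sx nodup_In in_flat_map; exists i; split; last exact: HSup.
by apply: mem_In; rewrite mem_enum.
Qed.

Lemma Sx_B x a : In a (Sx x) -> (maxat0 a < B)%N.
Proof. rewrite /Sx nodup_In in_flat_map => -[i [_ H]]; exact: HB H. Qed.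

Lemma Sx_NoDup x : NoDup (Sx x).
Proof. exact: NoDup_nodup. Qed.

Definition sigma (i : 'I_n) (x u : W M) : grade :=
  gsum_list (map (fun a => if dP (~ sat0 M u a) then D M i x a else Some 0%N) (Sx x)).

Definition Uval (G : group n) x u := gsum_list (map (fun i => sigma i x u) (enum (proj1_sig G))).

Lemma unsat_M G x u : unsat_sum M G x u (Uval G x u).
Proof.
rewrite /unsat_sum.
have -> : Uval G x u = gsum_list (map (fun a => if dP (~ sat0 M u a) then groupD M G x a else Some 0%N) (Sx x)).
  rewrite /Uval /groupD.
  have -> : [seq (if dP (~ sat0 M u a) then gsum_list [seq D M i x a | i <- enum (sval G)] else Some 0%N) | a <- Sx x]
     = [seq gsum_list [seq (if dP (~ sat0 M u a) then D M i x a else Some 0%N) | i <- enum (sval G)] | a <- Sx x].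
    by apply: eq_map => a; rewrite (gsum_ifmap (dP _) (fun a i => D M i x a)).
  by rewrite (gsum_exchange (fun a i => if dP (~ sat0 M u a) then D M i x a else Some 0%N)).
apply: is_gsum_sig; first exact: Sx_NoDup.
move=> a /gsum_nz [i [_ H]]; exact: Sx_In H.
Qed.

Definition deltaP (G : group n) x u (d : 'I_n -> nat) : Prop :=
  forall m, rho M G x u = Some m ->
   (\sum_(i in proj1_sig G) d i)%N = m /\
   forall J' : group n, proj1_sig J' \proper proj1_sig G ->
     gle (rho M J' x u) (Some (\sum_(i in proj1_sig J') d i)%N).

Lemma deltaP_ex G x u : exists d, deltaP G x u d.
Proof.
case E: (rho M G x u) => [m|]; last by exists (fun _ => 0%N) => m; rewrite E.
have [_ [d [H1 H2]]] := HQ E.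
by exists d => m'; rewrite E => -[<-].
Qed.

Definition delta G x u : 'I_n -> nat :=
  proj1_sig (constructive_indefinite_description _ (deltaP_ex G x u)).

Lemma deltaS G x u : deltaP G x u (delta G x u).
Proof. rewrite /delta; exact: proj2_sig. Qed.

Definition pad (i : 'I_n) (y z : W2) : grade :=
  match z.2 with
  | Some G => if i \in proj1_sig G then
      match rho M G (orig y) (orig z) with
      | Some _ => match sigma i (orig y) (orig z) with
                  | Some s => Some (delta G (orig y) (orig z) i - s)%N
                  | None => None end
      | None => None end
    else None
  | None => None end.

Definition fresh (p : nat) : option W2 := [pick z : W2 | (B + enum_rank z == p)%N].

Lemma fresh_none p : (p < B)%N -> fresh p = None.
Proof.
rewrite /fresh => Hp; case: pickP => // z /eqP E.
by move: Hp; rewrite -E ltnNge leq_addr.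
Qed.

Lemma fresh_some z : fresh (B + enum_rank z) = Some z.
Proof.
rewrite /fresh; case: pickP => [z' /eqP E|H].
  by congr Some; apply: enum_rank_inj; apply: val_inj; move/addnI: E.
by have := H z; rewrite eqxx.
Qed.

Definition D2 (i : 'I_n) (y : W2) (a : L0 n) : grade :=
  match a with
  | L0atom p => match fresh p with Some z => pad i y z | None => D M i (orig y) a end
  | _ => D M i (orig y) a end.

Definition V2 (p : nat) (y : W2) : Prop :=
  match fresh p with Some z => z <> y | None => V M p (orig y) end.

Definition rho2 (G : group n) (y z : W2) : grade :=
  gsum_list (map (fun i => gadd (sigma i (orig y) (orig z)) (pad i y z)) (enum (proj1_sig G))).

Definition M2 : model n := @Model n W2 D2 rho2 V2.

Lemma D2_old i y a : (maxat0 a < B)%N -> D2 i y a = D M i (orig y) a.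
Proof. by case: a => //= p Hp; rewrite fresh_none. Qed.

Lemma sat0_pres a : (maxat0 a < B)%N -> forall y, sat0 M2 y a <-> sat0 M (orig y) a.
Proof.
elim: a => [p|b IH|b IHb c IHc|i k b IH] /= Hm y.
- by rewrite /V2 fresh_none.
- by rewrite IH.
- rewrite gtn_max in Hm; case/andP: Hm => H1 H2; rewrite IHb // IHc //.
- by rewrite D2_old.
Qed.


Lemma set1_ne0 (i : 'I_n) : [set i] != set0.
Proof. by apply/set0Pn; exists i; rewrite inE. Qed.
Definition g1 (i : 'I_n) : group n := exist _ [set i] (set1_ne0 i).

Lemma H1 G' i x u r : rho M G' x u = Some r -> proj1_sig G' = [set i] ->
  exists s, sigma i x u = Some s /\ (s <= r)%N.
Proof.
move=> E HG; have [[s' [Hs' Hle]] _] := HQ E.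
have := is_gsum_unique Hs' (unsat_M G' x u).
rewrite /Uval HG enum_set1 /= gsum_cons gsum_nil gadd0r => <-.
by case: s' Hs' Hle => // s _ Hle; exists s.
Qed.

Lemma sigma_le G x u m i : rho M G x u = Some m -> i \in proj1_sig G ->
  exists s, sigma i x u = Some s /\ (s <= delta G x u i)%N.
Proof.
move=> E iG; have [Hsum Hsub] := deltaS E.
case: (boolP (proj1_sig G == [set i])) => [/eqP HG|HG].
  have [s [Es Hs]] := H1 E HG; exists s; split => //.
  by move: Hsum; rewrite HG big_set1 => ->.
have P : [set i] \proper proj1_sig G by rewrite properEneq sub1set iG andbT eq_sym.
have := Hsub (g1 i) P; rewrite /= big_set1.
case E1: (rho M (g1 i) x u) => [r|] //= Hr.
have [s [Es Hs]] := H1 E1 (erefl _); exists s; split => //; exact: leq_trans Hr.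
Qed.

Lemma E_pad y z H m i : z.2 = Some H -> rho M H (orig y) (orig z) = Some m ->
  i \in proj1_sig H ->
  gadd (sigma i (orig y) (orig z)) (pad i y z) = Some (delta H (orig y) (orig z) i).
Proof.
move=> Hz E iH; rewrite /pad Hz iH E.
have [s [Es Hle]] := sigma_le E iH.
by rewrite Es /= subnKC.
Qed.

Lemma rho2_sum y z (G H : group n) m : z.2 = Some H -> rho M H (orig y) (orig z) = Some m ->
  proj1_sig G \subset proj1_sig H ->
  rho2 G y z = Some (\sum_(i in proj1_sig G) delta H (orig y) (orig z) i)%N.
Proof.
move=> Hz E sub; rewrite /rho2 (@gsum_some _ (delta H (orig y) (orig z))) ?big_enum //.
move=> i; rewrite mem_enum => iG; apply: E_pad Hz E _; exact: (subsetP sub).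
Qed.

Lemma rho2_eq y z (G : group n) m : z.2 = Some G -> rho M G (orig y) (orig z) = Some m ->
  rho2 G y z = Some m.
Proof.
move=> Hz E; rewrite (rho2_sum Hz E (subxx _)); have [-> _] := deltaS E; done.
Qed.

Lemma gle_none x : gle x None. Proof. by case: x. Qed.

Lemma Bnd G y z : gle (rho M G (orig y) (orig z)) (rho2 G y z).
Proof.
have [i0 i0G] := set0Pn _ (proj2_sig G).
have Hnone : forall i, i \in proj1_sig G -> pad i y z = None -> rho2 G y z = None.
  move=> i iG Hp; rewrite /rho2; apply: (gsum_none (i := i)); first by rewrite mem_enum.
  by rewrite Hp; case: (sigma _ _ _).
case E2: z.2 => [H|].
  2: { have Hp : pad i0 y z = None by rewrite /pad; move: E2 => ->.
       by rewrite (Hnone i0 i0G Hp); exact: gle_none. }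
case Er: (rho M H (orig y) (orig z)) => [m|]; last first.
  have Hp : pad i0 y z = None by rewrite /pad; move: (E2) => ->; rewrite Er; case: (_ \in _).
  by rewrite (Hnone i0 i0G Hp); exact: gle_none.
case: (boolP (proj1_sig G \subset proj1_sig H)) => sub; last first.
  case/subsetPn: sub => i iG niH.
  have Hp : pad i y z = None by rewrite /pad; move: (E2) => ->; rewrite (negbTE niH).
  by rewrite (Hnone i iG Hp); exact: gle_none.
case: (boolP (proj1_sig G == proj1_sig H)) => [/eqP e|ne].
  have -> : G = H by apply: val_inj.
  by rewrite (rho2_eq E2 Er) Er; exact: gle_refl.
have [_ Hsub] := deltaS Er.
rewrite (rho2_sum E2 Er sub); apply: Hsub; by rewrite properEneq ne sub.
Qed.

Definition freshl : list (L0 n) := map (fun z : W2 => L0atom (B + enum_rank z)) (enum {: W2}).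
Definition S2 (y : W2) : list (L0 n) := Sx (orig y) ++ freshl.

Lemma NoDup_map_inj {A C} (f : A -> C) l : (forall a b, f a = f b -> a = b) -> NoDup l -> NoDup (List.map f l).
Proof.
move=> inj; elim => /= [|a l0 na N IH]; constructor => //.
by case/in_map_iff => b [/inj -> ?].
Qed.

Lemma map_ext_In' {A C} (f g : A -> C) l : (forall a, In a l -> f a = g a) -> map f l = map g l.
Proof. elim: l => //= a l IH H; rewrite H ?IH //; [move=> b hb; apply: H|]; tauto. Qed.

Lemma S2_NoDup y : NoDup (S2 y).
Proof.
apply: NoDup_app; first exact: Sx_NoDup.
  rewrite /freshl mapE; apply: NoDup_map_inj; last exact/uniq_NoDup/enum_uniq.
  by move=> a b [/addnI /val_inj /enum_rank_inj].
move=> a /Sx_B Ha; rewrite /freshl mapE => /in_map_iff [z [Ez _]].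
by move: Ha; rewrite -Ez /= ltnNge leq_addr.
Qed.

Lemma S2_cover i y a : D2 i y a <> Some 0%N -> In a (S2 y).
Proof.
rewrite /S2 => H; apply/in_or_app.
have old : D M i (orig y) a <> Some 0%N -> In a (Sx (orig y)) \/ In a freshl.
  by move=> /Sx_In; left.
case: a H old => [p|b|b c|j k b] /=; try by move=> H old; apply: old.
rewrite /fresh; case: pickP => [z /eqP Ez|_] H old; last exact: old.
right; rewrite /freshl mapE; apply/in_map_iff; exists z; split; first by rewrite Ez.
by apply: mem_In; rewrite mem_enum.
Qed.

Lemma dP_iff (P Q : Prop) : (P <-> Q) -> dP P = dP Q.
Proof. by move=> H; case: dPP => p; case: dPP => q //; exfalso; tauto. Qed.

Lemma NGDM2 : is_NGDM M2.
Proof.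
move=> G y z; rewrite /unsat_sum; change (rho M2 G y z) with (rho2 G y z).
suff -> : rho2 G y z = gsum_list (map (fun a => if dP (~ sat0 M2 z a) then groupD M2 G y a else Some 0%N) (S2 y)).
  apply: is_gsum_sig; first exact: S2_NoDup.
  move=> a /gsum_nz [i [_ H]]; exact: S2_cover H.
rewrite /groupD.
have -> : [seq (if dP (~ sat0 M2 z a) then gsum_list [seq D M2 i y a | i <- enum (sval G)] else Some 0%N) | a <- S2 y]
     = [seq gsum_list [seq (if dP (~ sat0 M2 z a) then D2 i y a else Some 0%N) | i <- enum (sval G)] | a <- S2 y].
  by apply: eq_map => a; rewrite (gsum_ifmap (dP _) (fun a i => D2 i y a)).
rewrite (gsum_exchange (fun a i => if dP (~ sat0 M2 z a) then D2 i y a else Some 0%N)).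
rewrite /rho2; congr gsum_list; apply: eq_map => i.
rewrite map_cat gsum_app; congr gadd.
  rewrite /sigma; congr gsum_list; apply: map_ext_In' => a Ha.
  have Hm := Sx_B Ha.
  by rewrite (dP_iff (P := ~ sat0 M2 z a) (Q := ~ sat0 M (orig z) a)) ?D2_old // (sat0_pres Hm).
rewrite /freshl -map_comp.
rewrite -(@gsum_single _ (fun z' => pad i y z') (enum {: W2}) z) ?enum_uniq ?mem_enum //.
congr gsum_list; apply: eq_map => z' /=.
rewrite /D2 /V2 fresh_some.
rewrite (dP_iff (P := ~ (z' <> z)) (Q := z' = z)); last by split => [H|->]; [apply: NNPP|].
by case: dPP => [->|ne]; [rewrite eqxx|case: eqP].
Qed.

Lemma sat_pres phi : (maxatL phi < B)%N -> forall y, sat M2 y phi <-> sat M (orig y) phi.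
Proof.
elim: phi => [a|psi IH|psi IHp chi IHc|G k psi IH] /= Hm y.
- exact: sat0_pres.
- by rewrite IH.
- rewrite gtn_max in Hm; case/andP: Hm => H1 H2; rewrite IHp // IHc //.
- split => H.
  + move=> u Hu.
    case Er: (rho M G (orig y) u) => [m|]; rewrite Er in Hu => //.
    have [j [jlt ju]] := In_nth lw u w0 (Hlw u).
    have jlt' : (j < size lw)%N by rewrite size_length; apply/ltP.
    pose z : W2 := (Ordinal jlt', Some G).
    have oz : orig z = u by [].
    rewrite -oz; apply/IH => //; apply: H.
    by rewrite /= (rho2_eq (y := y) (z := z) (m := m)) // oz.
  + move=> z Hz; apply/IH => //; apply: H.
    exact: gle_trans (Bnd G y z) Hz.
Qed.

Lemma M2_finite : finite_model M2.
Proof.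
split.
  by exists (enum {: W2}) => y; apply: mem_In; rewrite mem_enum.
by move=> i y; exists (S2 y) => a; apply: S2_cover.
Qed.

End Constr.

Unset Implicit Arguments.

Theorem lemma2 (n : nat) (phi : L n) :
  (exists (M : model n) (w : W M), finite_model M /\ is_QNGDM M /\ sat M w phi) ->
  exists (M'' : model n) (w'' : W M''), finite_model M'' /\ is_NGDM M'' /\ sat M'' w'' phi.
Proof.
move=> [M [w [[[lw Hlw] HD] [HQ Hs]]]].
pose Sup i x := proj1_sig (constructive_indefinite_description _ (HD i x)).
have HSup : forall i x a, D M i x a <> Some 0%N -> In a (Sup i x).
  by move=> i x; exact: (proj2_sig (constructive_indefinite_description _ (HD i x))).
pose B := (maxatL phi + maxl (fun x => \max_(i < n) maxl maxat0 (Sup i x)) lw).+1.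
have HB : forall i x a, In a (Sup i x) -> (maxat0 a < B)%N.
  move=> i x a Ha; rewrite ltnS; apply: leq_trans (leq_addl _ _).
  apply: leq_trans (maxl_ge _ (Hlw x)).
  apply: leq_trans (leq_bigmax i); exact: maxl_ge.
have HBphi : (maxatL phi < B)%N by rewrite ltnS leq_addr.
have [j [jlt jw]] := In_nth lw w w (Hlw w).
have jlt' : (j < size lw)%N by rewrite size_length; apply/ltP.
exists (M2 w lw Sup B HQ).
exists ((Ordinal jlt', None) : W (M2 w lw Sup B HQ)).
split; first exact: M2_finite.
split; first exact: NGDM2.
by apply/(sat_pres Hlw HSup HBphi); rewrite /orig /= jw.
Qed.
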